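(* Let $m>0$, $K\neq 0$ and $H\in\mathbb{R}$, and consider the Schwarzschild metric written in the constant-mean-curvature form described in the context, on the exterior region $r>2m$. Let $\sigma_+$ and $\sigma_-$ be any solutions on $(2m,\infty)$ of the wave phase equations $$\Big(1-\tfrac{2m}{r}\Big)\frac{3}{K}\frac{d\sigma_\pm}{dr}=v\,P^{-1/2}+b_\pm ,$$ with $b_+=+1,\ b_-=-1$ if $K<0$ and $b_+=-1,\ b_-=+1$ if $K>0$. Then: (i) $\sigma_+$ and $\sigma_-$ are strictly monotonic functions of $r$ on $(2m,\infty)$; (ii) $\sigma_+(r)$ has a finite limit as $r\to\infty$ (the outgoing phase coordinate is bounded in the outward direction); (iii) $\sigma_-(r)$ has a finite limit as $r\to 2m^+$, and $d\sigma_-/dr$ remains bounded in magnitude and bounded away from zero on $(2m,R]$ for every $R>2m$, if and only if the naked shift reversal condition holds, i.e. if and only if $3H/K>8m^3$ (equivalently: $H$ and $K$ have the same sign and $(3H/K)^{1/3}>2m$; for $K<0$ this reads $H<\tfrac{8}{3}m^3K$). Consequently, the naked shift reversal condition is necessary and sufficient for the existence of bounded wave phase coordinates on the exterior part of a constant-mean-curvature slice.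
   Context: The spherically symmetric constant-mean-curvature (CMC) slicing of the Schwarzschild spacetime of mass $m$ is given, in coordinates $(t,r,\theta,\varphi)$ with $r$ the areal radius, by the metric $$ds^2=-\Big(1-\tfrac{2m}{r}\Big)dt^2+2vP^{-1/2}\,dt\,dr+r^4P^{-1}dr^2+r^2\,d\Omega^2,$$ where $d\Omega^2$ is the unit round two-sphere metric, $v(r)=Kr^3/3-H$, $P(r)=v^2+(1-2m/r)r^4$, $K$ is the (constant) mean curvature of the slices $t=\text{const}$ and $H$ is a real integration constant. On $r>2m$ one has $P>0$. The wave phase equations above express that $U_\pm=t-\frac{3}{K}\sigma_\pm(r)$ are null functions ($g^{\mu\nu}\partial_\mu U_\pm\partial_\nu U_\pm=0$), so outgoing/ingoing waves move at constant speed in $\sigma_+$/$\sigma_-$. The radial shift vector component of this slicing is $N^r=r^{-4}v\sqrt{P}$; it changes sign at $r_0=(3H/K)^{1/3}$ when $HK>0$, and the ''naked shift reversal condition'' is that this reversal occurs outside the horizon, $r_0>2m$, i.e. $3H/K>8m^3$. *)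

(* Defs.v *)
From Stdlib Require Import Reals.
From Coquelicot Require Export Coquelicot.
Open Scope R_scope.

Definition vfun (K H r : R) : R := K * r ^ 3 / 3 - H.

Definition Pfun (m K H r : R) : R := (vfun K H r) ^ 2 + (1 - 2 * m / r) * r ^ 4.

Definition wave_phase_solution (m K H b : R) (sigma : R -> R) : Prop :=
  forall r, 2 * m < r ->
    ex_derive sigma r /\
    (1 - 2 * m / r) * (3 / K) * Derive sigma r = vfun K H r / sqrt (Pfun m K H r) + b.

Definition strictly_monotonic_on_gt (a : R) (f : R -> R) : Prop :=
  (forall x y, a < x -> x < y -> f x < f y) \/
  (forall x y, a < x -> x < y -> f y < f x).

(* Main.v *)
Require Import Defs.
From Stdlib Require Import Reals Lra Psatz Classical.
From Coquelicot Require Import Coquelicot.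
Open Scope R_scope.
Lemma bl (x y : R) (eps : posreal) : Rabs (y - x) < eps -> ball x eps y.
Proof. intro h. exact h. Qed.
Lemma bl2 (x y : R) (eps : posreal) : ball x eps y -> Rabs (y - x) < eps.
Proof. intro h. exact h. Qed.

Lemma mvt (f df : R -> R) x y : x < y ->
  (forall z, x <= z <= y -> is_derive f z (df z)) ->
  exists c, x <= c <= y /\ f y - f x = df c * (y - x).
Proof.
  intros hxy hd.
  destruct (MVT_gen f x y df) as [c [hc he]].
  - intros z hz. apply hd. unfold Rmin, Rmax in hz. destruct (Rle_dec x y); lra.
  - intros z hz. apply continuity_pt_filterlim. apply (ex_derive_continuous (V:=R_NormedModule)).
    eexists. apply hd. unfold Rmin, Rmax in hz. destruct (Rle_dec x y); lra.
  - exists c. split; [|exact he]. unfold Rmin, Rmax in hc. destruct (Rle_dec x y); lra.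
Qed.

Lemma P_eq m K H r : 2*m < r -> 0 < m ->
  Pfun m K H r = (vfun K H r)^2 + (r - 2*m) * r^3.
Proof. intros. unfold Pfun. field. lra. Qed.

Lemma key m K H b σ r : 0 < m -> K <> 0 -> b*b = 1 ->
  wave_phase_solution m K H b σ -> 2*m < r ->
  ex_derive σ r /\
  3 * Derive σ r * (Pfun m K H r + (- b * vfun K H r) * sqrt (Pfun m K H r)) = K*b*r^4.
Proof.
  intros hm hK hb hs hr.
  destruct (hs r hr) as [hex heq]. split; [exact hex|].
  rewrite P_eq in heq |- *; try lra.
  set (v := vfun K H r) in *.
  set (e := r - 2*m) in *.
  set (D := Derive σ r) in *.
  assert (he : 0 < e) by (unfold e; lra).
  assert (hP : 0 < v^2 + e*r^3) by (assert (0 < r^3) by (apply pow_lt; lra); nra).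
  set (P := v^2 + e*r^3) in *.
  assert (hq : 0 < sqrt P) by (apply sqrt_lt_R0; lra).
  assert (hqq : sqrt P * sqrt P = P) by (apply sqrt_sqrt; lra).
  set (q := sqrt P) in *.
  assert (H1 : 3 * D * e * q = K * r * (v + b*q)).
  { assert (e = (1 - 2*m/r) * r) by (unfold e; field; lra).
    rewrite H0.
    replace (3 * D * ((1 - 2 * m / r) * r) * q) with ((1 - 2 * m / r) * (3 / K) * D * (K * r * q)) by (field; lra).
    rewrite heq. field. lra. }
  apply (Rmult_eq_reg_l e); [|lra].
  replace (e * (3 * D * (P + - b * v * q))) with (3 * D * e * q * (q - b*v)) by (rewrite <- hqq; ring).
  rewrite H1.
  replace (K * r * (v + b * q) * (q - b * v)) with (K*r*(b*(q*q) - b*b*v*q - b * v^2 + v*q)) by ring.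
  rewrite hb, hqq. unfold P. ring.
Qed.

Lemma dform m K H b σ r : 0 < m -> K <> 0 -> b*b = 1 ->
  wave_phase_solution m K H b σ -> 2*m < r ->
  exists q Q, ex_derive σ r /\ 0 < q /\ q*q = (vfun K H r)^2 + (r-2*m)*r^3 /\
   Q = q*q + (-b * vfun K H r)*q /\ 2*Q = (q + (-b * vfun K H r))^2 + (r-2*m)*r^3 /\
   0 < Q /\ 3 * Derive σ r * Q = K*b*r^4.
Proof.
  intros hm hK hb hs hr.
  destruct (key m K H b σ r hm hK hb hs hr) as [hex heq].
  assert (hP := P_eq m K H r hr hm).
  rewrite hP in heq.
  set (v := vfun K H r) in *.
  set (e := r - 2*m) in *.
  assert (he : 0 < e) by (unfold e; lra).
  assert (hr3 : 0 < r^3) by (apply pow_lt; lra).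
  assert (hPp : 0 < v^2 + e*r^3) by nra.
  assert (hq : 0 < sqrt (v^2 + e*r^3)) by (apply sqrt_lt_R0; lra).
  assert (hqq : sqrt (v^2 + e*r^3) * sqrt (v^2 + e*r^3) = v^2 + e*r^3) by (apply sqrt_sqrt; lra).
  set (q := sqrt (v^2 + e*r^3)) in *.
  exists q, (q*q + (-b*v)*q).
  assert (h2 : 2*(q*q + (-b*v)*q) = (q + (-b * v))^2 + e*r^3).
  { replace ((q + - b * v) ^ 2) with (q*q + 2*(-b*v)*q + (b*b)*v^2) by ring. rewrite hb, hqq. ring. }
  split; [exact hex|]. split; [exact hq|]. split; [exact hqq|]. split; [reflexivity|].
  split; [exact h2|]. split; [assert (0 <= (q + -b*v)^2) by apply pow2_ge_0; assert (0 < e*r^3) by nra; lra|]. rewrite hqq. exact heq.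
Qed.

Lemma incr (f : R -> R) a : (forall z, a < z -> ex_derive f z /\ 0 < Derive f z) ->
  forall x y, a < x -> x < y -> f x < f y.
Proof.
  intros hd x y hx hxy.
  destruct (mvt f (Derive f) x y hxy) as [c [hc he]].
  - intros z hz. apply Derive_correct. apply hd. lra.
  - assert (0 < Derive f c) by (apply hd; lra). nra.
Qed.

Lemma decr (f : R -> R) a : (forall z, a < z -> ex_derive f z /\ Derive f z < 0) ->
  forall x y, a < x -> x < y -> f y < f x.
Proof.
  intros hd x y hx hxy.
  destruct (mvt f (Derive f) x y hxy) as [c [hc he]].
  - intros z hz. apply Derive_correct. apply hd. lra.
  - assert (Derive f c < 0) by (apply hd; lra). nra.
Qed.

Lemma sp_deriv_bound m K H s sp r : 0 < m -> K <> 0 -> (s = 1 \/ s = -1) -> 0 < K*s ->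
  wave_phase_solution m K H (-s) sp -> 2*m + 1 + 6 * Rabs H / (K*s) <= r ->
  ex_derive sp r /\ - (24/(K*s)) / (r*r) <= Derive sp r.
Proof.
  intros hm hK hs hk hsp hr.
  assert (hsH : s*H <= Rabs H) by (unfold Rabs; destruct (Rcase_abs H); destruct hs; subst; lra).
  assert (hss : (-s)*(-s) = 1) by (destruct hs; subst; ring).
  set (k := K*s) in *.
  assert (hH : 0 <= 6 * Rabs H / k) by (apply Rmult_le_pos; [assert (0 <= Rabs H) by apply Rabs_pos; lra| left; apply Rinv_0_lt_compat; lra]).
  destruct (dform m K H (-s) sp r hm hK hss hsp ltac:(lra)) as [q [Q [hex [hq [hqq [hQ [h2 [hQp hD]]]]]]]].
  split; [exact hex|].
  set (v := vfun K H r) in *.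
  set (D := Derive sp r) in *.
  assert (hr1 : 1 <= r) by lra.
  assert (hkr : 6 * Rabs H <= k * r).
  { assert (6 * Rabs H / k * k <= r * k) by (apply Rmult_le_compat_r; lra).
    replace (6 * Rabs H / k * k) with (6 * Rabs H) in H0 by (field; lra). lra. }
  assert (hr3 : r <= r^3) by nra.
  assert (hw : k * r^3 / 6 <= s * v).
  { unfold v, vfun. assert (E: s * (K * r ^ 3 / 3 - H) = k*r^3/3 - s*H) by (unfold k; field). rewrite E.
    nra. }
  replace (- - s * v) with (s*v) in * by ring.
  set (w := s*v) in *.
  assert (hw0 : 0 < k * r^3 / 6) by (assert (0 < r^3) by (apply pow_lt; lra); nra).
  assert (hQb : k*k*(r^3*r^3) / 72 <= Q).
  { assert ((k*r^3/6)*(k*r^3/6) <= w*w) by nra. nra. }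
  replace (K * - s) with (-k) in hD by (unfold k; ring).
  assert (hD0 : D <= 0).
  { assert (0 < r^4) by (apply pow_lt; lra). nra. }
  set (X := - D * (r*r)).
  assert (hX : X * (3 * Q) = k * (r^3*r^3)).
  { unfold X. replace (- D * (r * r) * (3 * Q)) with (- (3*D*Q) * (r*r)) by ring. rewrite hD. ring. }
  assert (hX0 : 0 <= X) by (unfold X; nra).
  assert (hr6 : 0 < r^3*r^3) by (assert (0 < r^3) by (apply pow_lt; lra); nra).
  assert (hXk : X * k <= 24).
  { assert (X * (3 * (k*k*(r^3*r^3)/72)) <= k * (r^3*r^3)) by (rewrite <- hX; apply Rmult_le_compat_l; lra).
    assert (X * k * (k * (r^3*r^3)) <= 24 * (k * (r^3*r^3))) by nra.
    apply Rmult_le_reg_r with (k * (r^3*r^3)); nra. }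
  apply Rmult_le_reg_r with (r*r); [nra|].
  replace (- (24 / k) / (r * r) * (r * r)) with (- (24/k)) by (field; split; lra).
  assert (X <= 24/k) by (apply Rmult_le_reg_r with k; [lra|]; replace (24/k*k) with 24 by (field; lra); lra).
  unfold X in H0. lra.
Qed.

Lemma sign_d m K H b σ : 0 < m -> K <> 0 -> b*b = 1 ->
  wave_phase_solution m K H b σ -> forall z, 2*m < z ->
  ex_derive σ z /\ (0 < K*b -> 0 < Derive σ z) /\ (K*b < 0 -> Derive σ z < 0).
Proof.
  intros hm hK hb hs z hz.
  destruct (dform m K H b σ z hm hK hb hs hz) as [q [Q [hex [hq [hqq [hQ [h2 [hQp hD]]]]]]]].
  assert (0 < z^4) by (apply pow_lt; lra).
  split; [exact hex|]. split; intro; nra.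
Qed.

Lemma sp_lim m K H s sp : 0 < m -> K <> 0 -> (s = 1 \/ s = -1) -> 0 < K*s ->
  wave_phase_solution m K H (-s) sp -> exists L, is_lim sp p_infty (Finite L).
Proof.
  intros hm hK hs hk hsp.
  assert (hss : (-s)*(-s) = 1) by (destruct hs; subst; ring).
  assert (hdec : forall x y, 2*m < x -> x < y -> sp y < sp x).
  { apply decr. intros z hz. destruct (sign_d m K H (-s) sp hm hK hss hsp z hz) as [a [_ c]].
    split; [exact a|]. apply c. nra. }
  set (R1 := 2*m + 1 + 6 * Rabs H / (K*s)).
  assert (hH : 0 <= 6 * Rabs H / (K*s)) by (apply Rmult_le_pos; [assert (0 <= Rabs H) by apply Rabs_pos; lra| left; apply Rinv_0_lt_compat; lra]).
  assert (hR1 : 2*m + 1 <= R1) by (unfold R1; lra).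
  set (C := 24 / (K*s)).
  assert (hlow : forall y, R1 <= y -> sp R1 - C / R1 <= sp y).
  { intros y hy. destruct (Req_dec y R1) as [->|hne].
    - assert (0 < C / R1) by (unfold C; apply Rdiv_lt_0_compat; [apply Rdiv_lt_0_compat; lra|lra]). lra.
    - destruct (mvt (fun z => sp z - C / z) (fun z => Derive sp z + C/(z*z)) R1 y ltac:(lra)) as [c [hc he]].
      + intros z hz. destruct (sp_deriv_bound m K H s sp z hm hK hs hk hsp ltac:(unfold R1 in *; lra)) as [hex _].
        auto_derive. split; [exact hex|split; [lra|exact I]]. replace (Derive (fun x => sp x) z) with (Derive sp z) by reflexivity. field. lra.
      + destruct (sp_deriv_bound m K H s sp c hm hK hs hk hsp ltac:(unfold R1 in *; lra)) as [_ hb].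
        assert (0 <= Derive sp c + C/(c*c)) by (unfold C; lra).
        assert (0 <= (Derive sp c + C / (c * c)) * (y - R1)) by (apply Rmult_le_pos; lra).
        assert (0 < C / y) by (unfold C; apply Rdiv_lt_0_compat; [apply Rdiv_lt_0_compat; lra|lra]).
        lra. }
  set (E := fun z => exists x, R1 <= x /\ z = - sp x).
  destruct (completeness E) as [l [hub hl]].
  - exists (- (sp R1 - C / R1)). intros z [x [hx ->]]. specialize (hlow x hx). lra.
  - exists (- sp R1). exists R1. split; [lra|reflexivity].
  - exists (-l). apply is_lim_spec. intros eps.
    destruct (classic (exists x0, R1 <= x0 /\ l - eps < - sp x0)) as [[x0 [hx0 hlt]]|hn].
    + exists x0. intros y hy.
      assert (h1 : - sp y <= l) by (apply hub; exists y; split; [lra|reflexivity]).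
      assert (h2 : sp y < sp x0) by (apply hdec; lra).
      apply Rabs_def1; lra.
    + exfalso. assert (l <= l - eps).
      { apply hl. intros z [x [hx ->]]. destruct (Rle_lt_dec (- sp x) (l - eps)) as [h|h]; [exact h|].
        exfalso. apply hn. exists x. split; assumption. }
      destruct eps as [e he]. simpl in *. lra.
Qed.

Lemma sm_fwd m K H s sm : 0 < m -> K <> 0 -> (s = 1 \/ s = -1) -> 0 < K*s ->
  wave_phase_solution m K H s sm ->
  (forall R0, 2 * m < R0 ->
       exists c C : R, 0 < c /\
         forall r, 2 * m < r -> r <= R0 ->
           c <= Rabs (Derive sm r) /\ Rabs (Derive sm r) <= C) ->
  3 * H / K > 8 * m ^ 3.
Proof.
  intros hm hK hs hk hsm hb.
  destruct (Rle_lt_dec (3*H/K) (8*m^3)) as [hle|hlt]; [exfalso|exact hlt].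
  assert (hX : 3*H/K*K = 3*H) by (field; exact hK).
  assert (hsH : s*H <= 8*m^3*(K*s)/3).
  { destruct hs; subst.
    - assert (0 <= (8*m^3 - 3*H/K)*K) by (apply Rmult_le_pos; lra). nra.
    - assert (K < 0) by lra. assert (0 <= (8*m^3 - 3*H/K)*(-K)) by (apply Rmult_le_pos; lra). nra. }
  assert (hss : s*s = 1) by (destruct hs; subst; ring).
  destruct (hb (2*m+1) ltac:(lra)) as [c [C [hc hcC]]].
  set (k := K*s) in *.
  set (e := Rmin 1 (2*m*k/(3*(Rabs C + 1)))).
  assert (hC1 : 0 < Rabs C + 1) by (assert (0 <= Rabs C) by apply Rabs_pos; lra).
  assert (he0 : 0 < e) by (unfold e; apply Rmin_pos; [lra| apply Rdiv_lt_0_compat; nra]).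
  assert (he1 : e <= 1) by (unfold e; apply Rmin_l).
  assert (he2 : 3 * e * (Rabs C + 1) <= 2*m*k).
  { assert (e <= 2*m*k/(3*(Rabs C + 1))) by (unfold e; apply Rmin_r).
    assert (Hx : e * (3*(Rabs C + 1)) <= 2*m*k/(3*(Rabs C + 1)) * (3*(Rabs C + 1))) by (apply Rmult_le_compat_r; lra).
    replace (2*m*k/(3*(Rabs C + 1)) * (3*(Rabs C + 1))) with (2*m*k) in Hx by (field; lra). lra. }
  set (r := 2*m + e).
  destruct (dform m K H s sm r hm hK hss hsm ltac:(unfold r; lra)) as [q [Q [hex [hq [hqq [hQ [h2 [hQp hD]]]]]]]].
  destruct (hcC r ltac:(unfold r; lra) ltac:(unfold r; lra)) as [_ hDC].
  set (v := vfun K H r) in *.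
  set (D := Derive sm r) in *.
  assert (her : r - 2*m = e) by (unfold r; ring). rewrite her in hqq, h2.
  assert (hr3 : 8*m^3 < r^3).
  { unfold r. replace ((2*m+e)^3) with (8*m^3 + 12*(m*m*e) + 6*(m*e*e) + e*e*e) by ring.
    assert (0 < m*m*e) by (repeat apply Rmult_lt_0_compat; lra).
    assert (0 < m*e*e) by (repeat apply Rmult_lt_0_compat; lra).
    assert (0 < e*e*e) by (repeat apply Rmult_lt_0_compat; lra). lra. }
  assert (hw : - s * v < 0).
  { unfold v, vfun. assert (E: - s * (K * r ^ 3 / 3 - H) = s*H - k*r^3/3) by (unfold k; field). rewrite E. nra. }
  set (w := - s * v) in *.
  assert (hww : w * w = v ^ 2) by (unfold w; replace (- s * v * (- s * v)) with ((s*s)*(v*v)) by ring; rewrite hss; ring).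
  assert (hr0 : 0 < r^3) by (apply pow_lt; unfold r; lra).
  assert (hqw : 0 <= q + w) by nra.
  assert (hQe : Q <= e * r^3).
  { rewrite hQ. assert ((q - w)*(q + w) = e*r^3) by nra. nra. }
  assert (hD' : 3*D*Q = k*r^4) by (rewrite hD; unfold k; ring).
  clear hD. rename hD' into hD.
  assert (hD0 : 0 < D).
  { assert (0 < r^4) by (apply pow_lt; unfold r; lra).
    destruct (Rle_lt_dec D 0) as [h|h]; [|exact h].
    assert (0 <= (-D)*Q) by (apply Rmult_le_pos; lra).
    assert (0 < k*r^4) by (apply Rmult_lt_0_compat; lra). lra. }
  assert (hDe : k * r <= 3 * D * e).
  { assert (3*D*Q <= 3*D*(e*r^3)) by (apply Rmult_le_compat_l; lra).
    replace (k*r^4) with ((k*r)*r^3) in hD by ring.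
    assert ((k * r) * r^3 <= (3*D*e)*r^3) by nra.
    apply Rmult_le_reg_r with (r^3); lra. }
  assert (hkr : k * (2*m) < k * r) by (apply Rmult_lt_compat_l; unfold r; lra).
  assert (hC : C < D).
  { assert (Rabs C + 1 <= D \/ D < Rabs C + 1) as [h|h] by lra.
    - assert (C <= Rabs C) by apply Rle_abs. lra.
    - exfalso. assert (3*e*D < 3*e*(Rabs C + 1)) by (apply Rmult_lt_compat_l; lra). lra. }
  rewrite Rabs_pos_eq in hDC; lra.
Qed.

Lemma sm_bounds m K H s sm : 0 < m -> K <> 0 -> (s = 1 \/ s = -1) -> 0 < K*s ->
  wave_phase_solution m K H s sm -> 3 * H / K > 8 * m ^ 3 ->
  (forall R0, 2 * m < R0 ->
       exists c C : R, 0 < c /\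
         forall r, 2 * m < r -> r <= R0 ->
           c <= Rabs (Derive sm r) /\ Rabs (Derive sm r) <= C).
Proof.
  intros hm hK hs hk hsm hc R0 hR0.
  assert (hX : 3*H/K*K = 3*H) by (field; exact hK).
  assert (hss : s*s = 1) by (destruct hs; subst; ring).
  assert (hAK : Rabs K = K*s) by (destruct hs; subst; [rewrite Rabs_pos_eq; lra| rewrite Rabs_left; lra]).
  assert (ha : 8*m^3*(K*s)/3 < s*H).
  { destruct hs; subst.
    - assert (0 < (3*H/K - 8*m^3)*K) by (apply Rmult_lt_0_compat; lra). nra.
    - assert (K < 0) by lra. assert (0 < (3*H/K - 8*m^3)*(-K)) by (apply Rmult_lt_0_compat; lra). nra. }
  set (k := K*s) in *.
  set (a := s*H - 8*m^3*k/3).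
  assert (ha0 : 0 < a) by (unfold a; lra).
  set (V := Rabs K * R0^3/3 + Rabs H).
  set (B := 2*(V*V + R0^4)).
  assert (hm4 : 0 < (2*m)^4) by (apply pow_lt; lra).
  assert (hR03 : 0 < R0^3) by (apply pow_lt; lra).
  assert (hR04 : 0 < R0^4) by (apply pow_lt; lra).
  assert (hB : 0 < B) by (unfold B; assert (0 <= V*V) by apply Rle_0_sqr; lra).
  set (c := k*(2*m)^4/(3*B)).
  assert (hc0 : 0 < c) by (unfold c; apply Rdiv_lt_0_compat; [apply Rmult_lt_0_compat|]; lra).
  assert (hR02 : 0 < R0*R0) by nra.
  set (δ := a/(2*k*(R0*R0))).
  assert (hδ : 0 < δ) by (unfold δ; apply Rdiv_lt_0_compat; [lra| apply Rmult_lt_0_compat; lra]).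
  assert (hδk : δ * (k*(R0*R0)) = a/2) by (unfold δ; field; split; lra).
  assert (hm3 : 0 < (2*m)^3) by (apply pow_lt; lra).
  set (Q0 := Rmin (a*a/8) (δ*(2*m)^3/2)).
  assert (hQ0 : 0 < Q0) by (unfold Q0; apply Rmin_glb_lt; [assert (0 < a*a) by nra|assert (0 < δ*(2*m)^3) by nra]; lra).
  exists c, (k*R0^4/(3*Q0)). split; [exact hc0|].
  intros r hr hrR.
  destruct (dform m K H s sm r hm hK hss hsm hr) as [q [Q [hex [hq [hqq [hQ [h2 [hQp hD]]]]]]]].
  set (v := vfun K H r) in *.
  set (D := Derive sm r) in *.
  set (e := r - 2*m) in *.
  assert (he : 0 < e) by (unfold e; lra).
  assert (hr0 : 0 < r) by lra.
  assert (hD' : 3*D*Q = k*r^4) by (rewrite hD; unfold k; ring).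
  clear hD. rename hD' into hD.
  assert (hr4 : 0 < r^4) by (apply pow_lt; lra).
  assert (hkr4 : 0 < k*r^4) by (apply Rmult_lt_0_compat; lra).
  assert (hD0 : 0 < D).
  { destruct (Rle_lt_dec D 0) as [h|h]; [|exact h].
    assert (0 <= (-D)*Q) by (apply Rmult_le_pos; lra). lra. }
  rewrite Rabs_pos_eq by lra.
  set (w := - s * v) in *.
  assert (hww : w * w = v ^ 2) by (unfold w; replace (- s * v * (- s * v)) with ((s*s)*(v*v)) by ring; rewrite hss; ring).
  assert (hr3 : r^3 <= R0^3) by (apply pow_incr; lra).
  assert (hr3p : 0 < r^3) by (apply pow_lt; lra).
  assert (hr4R : r^4 <= R0^4) by (apply pow_incr; lra).
  assert (hm4r : (2*m)^4 <= r^4) by (apply pow_incr; lra).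
  assert (hm3r : (2*m)^3 <= r^3) by (apply pow_incr; lra).
  assert (hv : Rabs v <= V).
  { unfold v, vfun, V. replace (K * r ^ 3 / 3 - H) with (K * (r^3/3) + - H) by field.
    eapply Rle_trans; [apply Rabs_triang|]. rewrite Rabs_mult, Rabs_Ropp.
    rewrite (Rabs_pos_eq (r^3/3)) by lra.
    assert (0 <= Rabs K) by apply Rabs_pos.
    assert (Rabs K * (r^3/3) <= Rabs K * (R0^3/3)) by (apply Rmult_le_compat_l; lra). lra. }
  assert (hv2 : v^2 <= V*V).
  { rewrite <- pow2_abs. assert (0 <= Rabs v) by apply Rabs_pos. nra. }
  assert (her : e * r^3 <= R0^4).
  { replace (R0^4) with (R0 * R0^3) by ring.
    assert (e * r^3 <= R0 * r^3) by (apply Rmult_le_compat_r; unfold e; lra).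
    assert (R0 * r^3 <= R0 * R0^3) by (apply Rmult_le_compat_l; lra). lra. }
  assert (hwq : w * q <= q * q).
  { assert (w <= q).
    { destruct (Rle_lt_dec w q) as [h|h]; [exact h|]. exfalso.
      assert (q*q < w*w) by nra. assert (0 < e*r^3) by nra. lra. }
    apply Rmult_le_compat_r; lra. }
  assert (hQB : Q <= B) by (unfold B; lra).
  split.
  -
    unfold c. apply Rmult_le_reg_r with (3*B); [lra|].
    replace (k * (2 * m) ^ 4 / (3 * B) * (3 * B)) with (k * (2*m)^4) by (field; lra).
    assert (k * (2*m)^4 <= k * r^4) by (apply Rmult_le_compat_l; lra).
    assert (3*D*Q <= 3*D*B) by (apply Rmult_le_compat_l; lra). lra.
  -
    assert (hQQ0 : Q0 <= Q).
    { destruct (Rle_lt_dec e δ) as [hed|hed].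
      + assert (hw : a/2 <= w).
        { assert (hcube : r^3 - 8*m^3 = e*(r*r + 2*m*r + 4*m*m)) by (unfold e; ring).
          assert (hsq : r*r + 2*m*r + 4*m*m <= 3*(R0*R0)) by nra.
          assert (e*(r*r + 2*m*r + 4*m*m) <= δ*(3*(R0*R0))).
          { apply Rmult_le_compat; try lra. nra. }
          assert (hwe : w = a - k*(r^3 - 8*m^3)/3) by (unfold w, v, vfun, a, k; field).
          rewrite hwe, hcube.
          assert (k*(e*(r*r + 2*m*r + 4*m*m)) <= k*(δ*(3*(R0*R0)))) by (apply Rmult_le_compat_l; lra).
          lra. }
        assert (0 <= e*r^3) by nra.
        assert (a*a/4 <= (q+w)^2) by nra.
        unfold Q0. eapply Rle_trans; [apply Rmin_l|]. lra.
      + assert (δ*(2*m)^3 <= e*r^3) by (apply Rmult_le_compat; lra).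
        assert (0 <= (q+w)^2) by apply pow2_ge_0.
        unfold Q0. eapply Rle_trans; [apply Rmin_r|]. lra. }
    apply Rmult_le_reg_r with (3*Q0); [lra|].
    replace (k * R0 ^ 4 / (3 * Q0) * (3 * Q0)) with (k * R0^4) by (field; lra).
    assert (k * r^4 <= k * R0^4) by (apply Rmult_le_compat_l; lra).
    assert (3*D*Q0 <= 3*D*Q) by (apply Rmult_le_compat_l; lra). lra.
Qed.

Lemma sm_lim m K H s sm : 0 < m -> K <> 0 -> (s = 1 \/ s = -1) -> 0 < K*s ->
  wave_phase_solution m K H s sm ->
  (forall R0, 2 * m < R0 ->
       exists c C : R, 0 < c /\
         forall r, 2 * m < r -> r <= R0 ->
           c <= Rabs (Derive sm r) /\ Rabs (Derive sm r) <= C) ->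
  exists L : R, filterlim sm (at_right (2 * m)) (locally L).
Proof.
  intros hm hK hs hk hsm hb.
  assert (hss : s*s = 1) by (destruct hs; subst; ring).
  assert (hinc : forall x y, 2*m < x -> x < y -> sm x < sm y).
  { apply incr. intros z hz. destruct (sign_d m K H s sm hm hK hss hsm z hz) as [a [c _]].
    split; [exact a|]. apply c. exact hk. }
  set (R0 := 2*m+1).
  destruct (hb R0 ltac:(unfold R0; lra)) as [c [C [hc hcC]]].
  assert (hlow : forall x, 2*m < x <= R0 -> sm R0 - Rabs C <= sm x).
  { intros x hx. destruct (Req_dec x R0) as [->|hne].
    - assert (0 <= Rabs C) by apply Rabs_pos. lra.
    - destruct (mvt sm (Derive sm) x R0 ltac:(lra)) as [z [hz he]].
      + intros z hz. apply Derive_correct. apply (sign_d m K H s sm hm hK hss hsm z). lra.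
      + destruct (hcC z ltac:(lra) ltac:(lra)) as [_ hzC].
        assert (Derive sm z <= Rabs C).
        { eapply Rle_trans; [apply Rle_abs|]. eapply Rle_trans; [exact hzC|apply Rle_abs]. }
        assert (0 <= Rabs C) by apply Rabs_pos.
        assert (Derive sm z * (R0 - x) <= Rabs C * (R0 - x)) by (apply Rmult_le_compat_r; lra).
        assert (Rabs C * (R0 - x) <= Rabs C * 1) by (apply Rmult_le_compat_l; unfold R0 in *; lra).
        lra. }
  set (E := fun z => exists x, 2*m < x <= R0 /\ z = - sm x).
  destruct (completeness E) as [l [hub hl]].
  - exists (- (sm R0 - Rabs C)). intros z [x [hx ->]]. specialize (hlow x hx). lra.
  - exists (- sm R0). exists R0. split; [unfold R0; lra|reflexivity].
  - exists (-l). apply filterlim_locally. intros eps.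
    destruct (classic (exists x0, 2*m < x0 <= R0 /\ l - eps < - sm x0)) as [[x0 [hx0 hlt]]|hn].
    + assert (hp : 0 < x0 - 2*m) by lra.
      exists (mkposreal _ hp). intros y hy hy2.
      apply bl2 in hy. simpl in hy.
      apply bl.
      assert (h1 : - sm y <= l) by (apply hub; exists y; split; [rewrite Rabs_lt_between in hy; lra|reflexivity]).
      assert (h2 : sm y < sm x0) by (apply hinc; rewrite Rabs_lt_between in hy; lra).
      apply Rabs_def1; lra.
    + exfalso. assert (l <= l - eps).
      { apply hl. intros z [x [hx ->]]. destruct (Rle_lt_dec (- sm x) (l - eps)) as [h|h]; [exact h|].
        exfalso. apply hn. exists x. split; assumption. }
      destruct eps as [e he]. simpl in *. lra.
Qed.

Theorem theorem1 (m K H bp bm : R) (sp sm : R -> R)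
  (hm : 0 < m) (hK : K <> 0)
  (hb : (K < 0 /\ bp = 1 /\ bm = -1) \/ (0 < K /\ bp = -1 /\ bm = 1))
  (hsp : wave_phase_solution m K H bp sp)
  (hsm : wave_phase_solution m K H bm sm) :
  (strictly_monotonic_on_gt (2 * m) sp /\ strictly_monotonic_on_gt (2 * m) sm) /\
  (exists L : R, is_lim sp p_infty (Finite L)) /\
  (((exists L : R, filterlim sm (at_right (2 * m)) (locally L)) /\
    (forall R0, 2 * m < R0 ->
       exists c C : R, 0 < c /\
         forall r, 2 * m < r -> r <= R0 ->
           c <= Rabs (Derive sm r) /\ Rabs (Derive sm r) <= C))
   <-> 3 * H / K > 8 * m ^ 3).
Proof.
  assert (hs : bm = 1 \/ bm = -1) by (destruct hb as [[? [? ?]]|[? [? ?]]]; [right|left]; assumption).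
  assert (hk : 0 < K * bm) by (destruct hb as [[? [? ?]]|[? [? ?]]]; subst; lra).
  assert (hpm : bp = - bm) by (destruct hb as [[? [? ?]]|[? [? ?]]]; subst; lra).
  assert (hss : bm*bm = 1) by (destruct hs; subst; ring).
  assert (hpp : bp*bp = 1) by (rewrite hpm; destruct hs; subst; ring).
  rewrite hpm in hsp.
  split; [split|split].
  - right. apply decr. intros z hz. destruct (sign_d m K H (-bm) sp hm hK ltac:(rewrite <- hpm; exact hpp) hsp z hz) as [a [_ c]].
    split; [exact a|]. apply c. nra.
  - left. apply incr. intros z hz. destruct (sign_d m K H bm sm hm hK hss hsm z hz) as [a [c _]].
    split; [exact a|]. apply c. exact hk.
  - exact (sp_lim m K H bm sp hm hK hs hk hsp).
  - split.
    + intros [_ hbd]. exact (sm_fwd m K H bm sm hm hK hs hk hsm hbd).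
    + intro hc. assert (hbd := sm_bounds m K H bm sm hm hK hs hk hsm hc).
      split; [exact (sm_lim m K H bm sm hm hK hs hk hsm hbd)|exact hbd].
Qed.
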